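(* Assume $\hat{\Omega}_{1:r} = \Omega_{1:r}$. Then $\Sigma$ and $\hat{\Sigma}$ satisfy: (T1) (MSS) For any $\rho \geq \rho(\boldsymbol{\mathcal{A}})$ and its corresponding $\tau$, any $\hat{\rho} \geq \rho(\hat{\boldsymbol{\mathcal{A}}})$ and its corresponding $\bar{\tau}$, \[ \rho(\hat{\boldsymbol{\mathcal{A}}}) - \rho(\boldsymbol{\mathcal{A}}) \leq \tau \epsilon_\rho + (\rho - \rho(\boldsymbol{\mathcal{A}})),\qquad \rho(\boldsymbol{\mathcal{A}}) - \rho(\hat{\boldsymbol{\mathcal{A}}}) \leq \bar{\tau} \epsilon_\rho + (\hat{\rho} - \rho(\hat{\boldsymbol{\mathcal{A}}})),\] where $\epsilon_\rho:= \sqrt{s} ((2 \bar{A} + \epsilon_{\mathbf{A}}) \epsilon_{\mathbf{A}} + \bar{A}^2 \epsilon_{\mathbf{T}})$. (T2) (Uniform stability) For any $\xi \geq \xi(\mathbf{A}_{1:s})$ and its corresponding $\kappa$, any $\hat{\xi} \geq \xi(\hat{\mathbf{A}}_{1:r})$ and its corresponding $\bar{\kappa}$, \[ \xi(\hat{\mathbf{A}}_{1:r}) - \xi(\mathbf{A}_{1:s}) \leq \kappa \epsilon_{\mathbf{A}} + (\xi - \xi(\mathbf{A}_{1:s})),\qquad \xi(\mathbf{A}_{1:s}) - \xi(\hat{\mathbf{A}}_{1:r}) \leq \bar{\kappa} \epsilon_{\mathbf{A}} + (\hat{\xi} - \xi(\hat{\mathbf{A}}_{1:r})).\]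
   Context: $\Sigma$ is an MJS $\mathbf{x}_{t+1}=\mathbf{A}_{\omega_t}\mathbf{x}_t+\mathbf{B}_{\omega_t}\mathbf{u}_t$ with $s$ modes and ergodic Markov matrix $\mathbf{T}$; given a partition $\Omega_{1:r}$ of $[s]$, $\sum_k\sum_{i,i'\in\Omega_k}\|\mathbf{A}_i-\mathbf{A}_{i'}\|_F\le\epsilon_{\mathbf{A}}$, similarly for $\mathbf{B}$ with $\epsilon_{\mathbf{B}}$, and $\mathbf{T}$ is $\epsilon_{\mathbf{T}}$-approximately lumpable ($\sum_{k,l}\sum_{i,i'\in\Omega_k}|\sum_{j\in\Omega_l}\mathbf{T}(i,j)-\sum_{j\in\Omega_l}\mathbf{T}(i',j)|\le\epsilon_{\mathbf{T}}$) or aggregatable ($\sum_k\sum_{i,i'\in\Omega_k}\|\mathbf{T}(i,:)-\mathbf{T}(i',:)\|_1\le\epsilon_{\mathbf{T}}$). Given estimated partition $\hat{\Omega}_{1:r}$, the reduced MJS $\hat{\Sigma}$ has $\hat{\mathbf{A}}_k$, $\hat{\mathbf{B}}_k$ the averages of $\mathbf{A}_i$, $\mathbf{B}_i$ over $i\in\hat{\Omega}_k$ and $\hat{\mathbf{T}}(k,l)=\frac{1}{|\hat{\Omega}_k|}\sum_{i\in\hat{\Omega}_k,j\in\hat{\Omega}_l}\mathbf{T}(i,j)$. The expanded MJS has $s$ modes with $\bar{\mathbf{A}}_i=\hat{\mathbf{A}}_k$ for $i\in\hat{\Omega}_k$ and Markov matrix $\bar{\mathbf{T}}$ with $\|\bar{\mathbf{T}}-\mathbf{T}\|_\infty\le\epsilon_{\mathbf{T}}$,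 $\|\bar{\mathbf{T}}-\mathbf{T}\|_F\le\epsilon_{\mathbf{T}}$, and $\sum_{j\in\hat{\Omega}_l}\bar{\mathbf{T}}(i,j)=\hat{\mathbf{T}}(k,l)$ for $i\in\hat{\Omega}_k$. Augmented matrices: $\boldsymbol{\mathcal{A}}$ ($sn^2\times sn^2$) with $ij$-th block $\mathbf{T}(j,i)\mathbf{A}_j\otimes\mathbf{A}_j$, $\hat{\boldsymbol{\mathcal{A}}}$ ($rn^2\times rn^2$) with blocks $\hat{\mathbf{T}}(j,i)\hat{\mathbf{A}}_j\otimes\hat{\mathbf{A}}_j$, $\bar{\boldsymbol{\mathcal{A}}}$ with blocks $\bar{\mathbf{T}}(j,i)\bar{\mathbf{A}}_j\otimes\bar{\mathbf{A}}_j$; $\rho(\cdot)$ is the spectral radius, $\xi(\cdot)$ the joint spectral radius. $\tau:=\sup_{k\in\mathbb{N}}\|\boldsymbol{\mathcal{A}}^k\|/\rho^k$, $\bar{\tau}:=\sup_k\|\bar{\boldsymbol{\mathcal{A}}}^k\|/\hat{\rho}^k$, $\kappa:=\sup_k\max_{\omega_{1:k}\in[s]^k}\|\mathbf{A}_{\omega_1}\cdots\mathbf{A}_{\omega_k}\|/\xi^k$, $\bar{\kappa}:=\sup_k\max_{\omega_{1:k}}\|\bar{\mathbf{A}}_{\omega_1}\cdots\bar{\mathbf{A}}_{\omega_k}\|/\hat{\xi}^k$. The scalar $\bar{A}:=\max_i\|\mathbf{A}_i\|$. *)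

(* Defs.v *)
From HB Require Import structures.
From mathcomp Require Import all_boot all_order all_algebra.
From mathcomp Require Import all_classical all_reals.
From mathcomp Require Import topology normedtype sequences exp.
From mathcomp Require Import complex mxtens.

Set Implicit Arguments.
Unset Strict Implicit.
Unset Printing Implicit Defensive.

Import Order.TTheory GRing.Theory Num.Theory.
Import numFieldNormedType.Exports.
Local Open Scope classical_set_scope.
Local Open Scope ring_scope.

Section MJSDefs.
Variable R : realType.

Definition frobn {m n} (M : 'M[R]_(m, n)) : R :=
  Num.sqrt (\sum_(i < m) \sum_(j < n) M i j ^+ 2).

Definition vnorm2 {n} (x : 'cV[R]_n) : R :=
  Num.sqrt (\sum_(i < n) x i 0 ^+ 2).

Definition opnorm {m n} (M : 'M[R]_(m, n)) : R :=
  sup [set vnorm2 (M *m x) | x in [set x : 'cV[R]_n | vnorm2 x = 1]].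

Definition infnorm {m n} (M : 'M[R]_(m, n)) : R :=
  \big[Num.max/0]_(i < m) \sum_(j < n) `|M i j|.

Definition specrad {m} (M : 'M[R]_m) : R :=
  sup [set Normc.normc l | l in
        [set l : R[i] | root (char_poly (map_mx (fun x : R => (x%:C)%C) M)) l]].

Definition prodmx {I : finType} {n k} (A : I -> 'M[R]_n) (w : {ffun 'I_k -> I})
  : 'M[R]_n := \big[mulmx/1%:M]_(j < k) A (w j).

Definition jsr {I : finType} {n} (A : I -> 'M[R]_n) : R :=
  limn (fun k : nat =>
     powR (\big[Num.max/0]_(w : {ffun 'I_k -> I}) opnorm (prodmx A w)) (k%:R^-1)).

Definition markov {s} (T : 'M[R]_s) : Prop :=
  (forall i j, 0 <= T i j) /\ (forall i, \sum_(j < s) T i j = 1).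

(* ergodic finite Markov chain (irreducible and aperiodic, i.e. primitive) *)
Definition ergodic {s} (T : 'M[R]_s) : Prop :=
  markov T /\ exists k : nat, forall i j, 0 < (T ^+ k) i j.

(* partition Omega_{1:r} of [s] encoded by the label map lab : Omega_k = lab^-1(k);
   every block is nonempty *)
Definition is_partition {s r} (lab : 'I_s -> 'I_r) : Prop :=
  forall k : 'I_r, exists i, lab i = k.

Definition clust_close {s r m p} (lab : 'I_s -> 'I_r) (A : 'I_s -> 'M[R]_(m, p))
  (eps : R) : Prop :=
  \sum_(k < r) \sum_(i < s | lab i == k) \sum_(i' < s | lab i' == k)
     frobn (A i - A i') <= eps.

Definition approx_lumpable {s r} (lab : 'I_s -> 'I_r) (T : 'M[R]_s) (eps : R) : Prop :=
  \sum_(k < r) \sum_(l < r) \sum_(i < s | lab i == k) \sum_(i' < s | lab i' == k)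
     `| \sum_(j < s | lab j == l) T i j - \sum_(j < s | lab j == l) T i' j | <= eps.

Definition approx_aggregatable {s r} (lab : 'I_s -> 'I_r) (T : 'M[R]_s) (eps : R) : Prop :=
  \sum_(k < r) \sum_(i < s | lab i == k) \sum_(i' < s | lab i' == k)
     \sum_(j < s) `| T i j - T i' j | <= eps.

Definition csize {s r} (lab : 'I_s -> 'I_r) (k : 'I_r) : R :=
  #|[set i | lab i == k]|%:R.

Definition red_mats {s r m p} (lab : 'I_s -> 'I_r) (A : 'I_s -> 'M[R]_(m, p))
  (k : 'I_r) : 'M[R]_(m, p) :=
  (csize lab k)^-1 *: \sum_(i < s | lab i == k) A i.

Definition red_markov {s r} (lab : 'I_s -> 'I_r) (T : 'M[R]_s) : 'M[R]_r :=
  \matrix_(k, l) ((csize lab k)^-1 *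
      \sum_(i < s | lab i == k) \sum_(j < s | lab j == l) T i j).

Definition exp_mats {s r m p} (lab : 'I_s -> 'I_r) (A : 'I_s -> 'M[R]_(m, p))
  (i : 'I_s) : 'M[R]_(m, p) := red_mats lab A (lab i).

Definition aug {s n} (T : 'M[R]_s) (A : 'I_s -> 'M[R]_n)
  : 'M[R]_(\sum_(i < s) (n * n)) :=
  \mxblock_(i < s, j < s) (T j i *: (A j *t A j)).

Definition Abar_max {s n} (A : 'I_s -> 'M[R]_n) : R :=
  \big[Num.max/0]_(i < s) opnorm (A i).

Definition eps_rho {s n} (A : 'I_s -> 'M[R]_n) (epsA epsT : R) : R :=
  Num.sqrt s%:R * ((2 * Abar_max A + epsA) * epsA + Abar_max A ^+ 2 * epsT).

End MJSDefs.

(* Main.v *)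
Require Import Defs.
From HB Require Import structures.
From mathcomp Require Import all_boot all_order all_algebra.
From mathcomp Require Import all_classical all_reals.
From mathcomp Require Import topology normedtype sequences exp.
From mathcomp Require Import complex mxtens.
From mathcomp Require Import ring lra zify.
Import Order.TTheory GRing.Theory Num.Theory.
Import numFieldNormedType.Exports.
Local Open Scope ring_scope.

Module Aux.
Set Implicit Arguments.
Unset Strict Implicit.
Unset Printing Implicit Defensive.

Section P1.
Variable R : realType.
Implicit Types (x y : R).

Lemma CS (I : finType) (a b : I -> R) :
  (\sum_i a i * b i) ^+ 2 <= (\sum_i a i ^+ 2) * (\sum_i b i ^+ 2).
Proof.
have H0 : 0 <= \sum_i \sum_j (a i * b j - a j * b i) ^+ 2.
  by apply: sumr_ge0 => i _; apply: sumr_ge0 => j _; exact: sqr_ge0.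
have E1 : \sum_i \sum_j (a i * b j - a j * b i) ^+ 2 =
   \sum_i \sum_j (a i ^+ 2 * b j ^+ 2) + \sum_i \sum_j (a j ^+ 2 * b i ^+ 2)
   - 2 * \sum_i \sum_j (a i * b i) * (a j * b j).
  rewrite (eq_bigr (fun i => \sum_j (a i ^+ 2 * b j ^+ 2 + a j ^+ 2 * b i ^+ 2
      - 2 * ((a i * b i) * (a j * b j))))); last first.
    by move=> i _; apply: eq_bigr => j _; ring.
  rewrite mulr_sumr -big_split -sumrB /=; apply: eq_bigr => i _.
  by rewrite mulr_sumr -big_split -sumrB.
have E2 : \sum_i \sum_j (a j ^+ 2 * b i ^+ 2) = \sum_i \sum_j (a i ^+ 2 * b j ^+ 2).
  by rewrite exchange_big.
have E3 : \sum_i \sum_j (a i ^+ 2 * b j ^+ 2) = (\sum_i a i ^+ 2) * (\sum_i b i ^+ 2).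
  by rewrite mulr_suml; apply: eq_bigr => i _; rewrite mulr_sumr.
have E4 : \sum_i \sum_j (a i * b i) * (a j * b j) = (\sum_i a i * b i) ^+ 2.
  by rewrite expr2 mulr_suml; apply: eq_bigr => i _; rewrite mulr_sumr.
rewrite E1 E2 E3 E4 in H0; lra.
Qed.

End P1.


Section P2.
Variable R : realType.

Definition ns {n} (x : 'cV[R]_n) : R := \sum_i x i 0 ^+ 2.
Definition frob2 {m n} (M : 'M[R]_(m, n)) : R := \sum_i \sum_j M i j ^+ 2.

Lemma vnorm2E n (x : 'cV[R]_n) : vnorm2 x = Num.sqrt (ns x).
Proof. by []. Qed.

Lemma ns_ge0 n (x : 'cV[R]_n) : 0 <= ns x.
Proof. by apply: sumr_ge0 => i _; exact: sqr_ge0. Qed.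

Lemma frob2_ge0 m n (M : 'M[R]_(m, n)) : 0 <= frob2 M.
Proof. by apply: sumr_ge0 => i _; apply: sumr_ge0 => j _; exact: sqr_ge0. Qed.

Lemma vnorm2_ge0 n (x : 'cV[R]_n) : 0 <= vnorm2 x.
Proof. exact: sqrtr_ge0. Qed.

Lemma sqrt_mul_sq (c a : R) : 0 <= c -> Num.sqrt (c ^+ 2 * a) = c * Num.sqrt a.
Proof.
move=> c0; rewrite sqrtrM ?sqr_ge0 // sqrtr_sqr ger0_norm //.
Qed.

Lemma sqrt_le_mul (c a b : R) : 0 <= c -> a <= c ^+ 2 * b ->
  Num.sqrt a <= c * Num.sqrt b.
Proof.
move=> c0 h; rewrite -sqrt_mul_sq //.
have [b0|b0] := leP 0 b.
  by rewrite ler_sqrt // mulr_ge0 // sqr_ge0.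
have hc : c ^+ 2 * b <= 0 by rewrite mulr_ge0_le0 ?sqr_ge0 // ltW.
by rewrite (ler0_sqrtr hc) (ler0_sqrtr (le_trans h hc)).
Qed.

Lemma ns_eq0 n (x : 'cV[R]_n) : ns x = 0 -> x = 0.
Proof.
move=> h; apply/matrixP => i j; rewrite ord1 mxE.
have := psumr_eq0P (fun i _ => sqr_ge0 (x i 0)) h (i := i) isT.
by move/eqP; rewrite sqrf_eq0 => /eqP.
Qed.

Lemma vnorm2_eq0 n (x : 'cV[R]_n) : vnorm2 x = 0 -> x = 0.
Proof.
move=> h; apply: ns_eq0; apply/eqP; rewrite eq_le ns_ge0 andbT.
by rewrite -sqrtr_eq0; apply/eqP.
Qed.

Lemma vnorm2_0 n : vnorm2 (0 : 'cV[R]_n) = 0.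
Proof. by rewrite vnorm2E /ns big1 ?sqrtr0 // => i _; rewrite mxE expr0n. Qed.

Lemma nsZ n a (x : 'cV[R]_n) : ns (a *: x) = a ^+ 2 * ns x.
Proof. by rewrite /ns mulr_sumr; apply: eq_bigr => i _; rewrite mxE exprMn. Qed.

Lemma vnorm2Z n a (x : 'cV[R]_n) : vnorm2 (a *: x) = `|a| * vnorm2 x.
Proof. by rewrite !vnorm2E nsZ sqrtrM ?sqr_ge0 // sqrtr_sqr. Qed.

Lemma ns_mul m n (M : 'M[R]_(m, n)) x : ns (M *m x) <= frob2 M * ns x.
Proof.
rewrite /ns /frob2 mulr_suml; apply: ler_sum => i _.
rewrite mxE; exact: CS.
Qed.

Lemma vnorm2_mul m n (M : 'M[R]_(m, n)) x :
  vnorm2 (M *m x) <= Num.sqrt (frob2 M) * vnorm2 x.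
Proof.
rewrite !vnorm2E -sqrtrM ?frob2_ge0 // ler_sqrt ?mulr_ge0 ?frob2_ge0 ?ns_ge0 //.
exact: ns_mul.
Qed.

Lemma vnorm2D n (x y : 'cV[R]_n) : vnorm2 (x + y) <= vnorm2 x + vnorm2 y.
Proof.
rewrite !vnorm2E.
have hx := ns_ge0 x; have hy := ns_ge0 y.
set sx := Num.sqrt (ns x); set sy := Num.sqrt (ns y).
rewrite -[sx + sy]ger0_norm ?addr_ge0 ?sqrtr_ge0 // -sqrtr_sqr ler_sqrt ?sqr_ge0 //.
have hc := CS (fun i => x i 0) (fun i => y i 0).
have e : ns (x + y) = ns x + ns y + 2 * \sum_i x i 0 * y i 0.
  rewrite /ns mulr_sumr -!big_split /=; apply: eq_bigr => i _; rewrite mxE; ring.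
rewrite e sqrrD !sqr_sqrtr //.
suff : \sum_i x i 0 * y i 0 <= sx * sy by lra.
apply: le_trans (ler_norm _) _.
rewrite -sqrtr_sqr -[sx * sy]ger0_norm ?mulr_ge0 ?sqrtr_ge0 // -sqrtr_sqr.
rewrite ler_sqrt ?sqr_ge0 // exprMn !sqr_sqrtr //.
Qed.

Local Open Scope classical_set_scope.

Lemma opnorm_ub m n (M : 'M[R]_(m, n)) x : vnorm2 (M *m x) <= opnorm M * vnorm2 x.
Proof.
have [x0|xn0] := eqVneq (vnorm2 x) 0.
  by rewrite x0 mulr0 (vnorm2_eq0 x0) mulmx0 vnorm2_0.
have xp : 0 < vnorm2 x by rewrite lt0r xn0 vnorm2_ge0.
set y := (vnorm2 x)^-1 *: x.
have y1 : vnorm2 y = 1 by rewrite vnorm2Z ger0_norm ?invr_ge0 ?vnorm2_ge0 // mulVf.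
have hs : has_sup [set vnorm2 (M *m x) | x in [set x : 'cV[R]_n | vnorm2 x = 1]].
  split; first by exists (vnorm2 (M *m y)); exists y.
  exists (Num.sqrt (frob2 M)) => _ [z /= z1 <-].
  by have := vnorm2_mul M z; rewrite z1 mulr1.
have h : vnorm2 (M *m y) <= sup [set vnorm2 (M *m x) | x in [set x : 'cV[R]_n | vnorm2 x = 1]].
  by apply: (sup_upper_bound hs); exists y.
move: h; have -> : M *m y = (vnorm2 x)^-1 *: (M *m x) by rewrite /y scalemxAr.
rewrite vnorm2Z ger0_norm ?invr_ge0 ?vnorm2_ge0 // => h.
by rewrite -ler_pdivrMr // mulrC.
Qed.

Lemma opnorm_ge0 m n (M : 'M[R]_(m, n)) : 0 <= opnorm M.
Proof.
have [[y y1]|ny] := pselect (exists y : 'cV[R]_n, vnorm2 y = 1).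
  by have := opnorm_ub M y; rewrite y1 mulr1; apply: le_trans; exact: vnorm2_ge0.
rewrite /opnorm.
have -> : [set vnorm2 (M *m x) | x in [set x : 'cV[R]_n | vnorm2 x = 1]] = set0.
  by rewrite -subset0 => _ [x /= x1 _]; apply: ny; exists x.
by rewrite sup0.
Qed.

Lemma opnorm_le m n (M : 'M[R]_(m, n)) c : 0 <= c ->
  (forall x, vnorm2 (M *m x) <= c * vnorm2 x) -> opnorm M <= c.
Proof.
move=> c0 h.
have [[y y1]|ny] := pselect (exists y : 'cV[R]_n, vnorm2 y = 1).
  apply: ge_sup; first by exists (vnorm2 (M *m y)); exists y.
  by move=> _ [z /= z1 <-]; have := h z; rewrite z1 mulr1.
rewrite /opnorm.
have -> : [set vnorm2 (M *m x) | x in [set x : 'cV[R]_n | vnorm2 x = 1]] = set0.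
  by rewrite -subset0 => _ [x /= x1 _]; apply: ny; exists x.
by rewrite sup0.
Qed.

Lemma opnorm_le_sq m n (M : 'M[R]_(m, n)) c : 0 <= c ->
  (forall x, ns (M *m x) <= c ^+ 2 * ns x) -> opnorm M <= c.
Proof. move=> c0 h; apply: opnorm_le => // x; rewrite !vnorm2E; exact: sqrt_le_mul. Qed.

Lemma opnorm_mul m n p (M : 'M[R]_(m, n)) (N : 'M[R]_(n, p)) :
  opnorm (M *m N) <= opnorm M * opnorm N.
Proof.
apply: opnorm_le; first by rewrite mulr_ge0 ?opnorm_ge0.
move=> x; rewrite -mulmxA; apply: le_trans (opnorm_ub _ _) _.
by rewrite -mulrA ler_wpM2l ?opnorm_ge0 // opnorm_ub.
Qed.

Lemma opnormD m n (M N : 'M[R]_(m, n)) : opnorm (M + N) <= opnorm M + opnorm N.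
Proof.
apply: opnorm_le; first by rewrite addr_ge0 ?opnorm_ge0.
move=> x; rewrite mulmxDl; apply: le_trans (vnorm2D _ _) _.
by rewrite mulrDl lerD // opnorm_ub.
Qed.

Lemma opnormZ m n a (M : 'M[R]_(m, n)) : opnorm (a *: M) <= `|a| * opnorm M.
Proof.
apply: opnorm_le; first by rewrite mulr_ge0 ?opnorm_ge0.
move=> x; rewrite -scalemxAl vnorm2Z -mulrA ler_wpM2l //; exact: opnorm_ub.
Qed.

Lemma opnormN m n (M : 'M[R]_(m, n)) : opnorm (- M) <= opnorm M.
Proof.
by rewrite -scaleN1r; apply: le_trans (opnormZ _ _) _; rewrite normrN normr1 mul1r.
Qed.

Lemma opnormB m n (M N : 'M[R]_(m, n)) : opnorm (M - N) <= opnorm M + opnorm N.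
Proof. by apply: le_trans (opnormD _ _) _; rewrite lerD // opnormN. Qed.

Lemma opnorm_frob m n (M : 'M[R]_(m, n)) : opnorm M <= Num.sqrt (frob2 M).
Proof. apply: opnorm_le; [exact: sqrtr_ge0 | exact: vnorm2_mul]. Qed.

Lemma frobnE m n (M : 'M[R]_(m, n)) : frobn M = Num.sqrt (frob2 M).
Proof. by []. Qed.

Lemma opnorm_frobn m n (M : 'M[R]_(m, n)) : opnorm M <= frobn M.
Proof. exact: opnorm_frob. Qed.

Lemma opnorm_sum m n (I : finType) (P : pred I) (F : I -> 'M[R]_(m, n)) :
  opnorm (\sum_(i | P i) F i) <= \sum_(i | P i) opnorm (F i).
Proof.
elim/big_rec2: _ => [|i y M _ h].
  by apply: opnorm_le => // x; rewrite mul0mx mul0r vnorm2_0.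
by apply: le_trans (opnormD _ _) _; rewrite lerD.
Qed.

End P2.


Section P3.
Variable R : realType.

Lemma sum_tag q (q_ : 'I_q -> nat) (F : 'I_(\sum_i q_ i) -> R) :
  \sum_s F s = \sum_i \sum_(k : 'I_(q_ i)) F (tagnat.Rank i k).
Proof.
rewrite sig_big_dep /= (reindex _ tagnat.sig_bij_on) /=.
by apply: eq_bigr => s _; rewrite -tagnat.rankE tagnat.sigK.
Qed.

Lemma ns_submxcol q (q_ : 'I_q -> nat) (x : 'cV[R]_(\sum_i q_ i)) :
  ns x = \sum_i ns (submxcol x i).
Proof.
rewrite /ns sum_tag; apply: eq_bigr => i _; apply: eq_bigr => k _.
by rewrite !mxE.
Qed.

Lemma ns_vnorm n (x : 'cV[R]_n) : ns x = vnorm2 x ^+ 2.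
Proof. by rewrite vnorm2E sqr_sqrtr // ns_ge0. Qed.

Lemma vnorm2_sum n (I : finType) (F : I -> 'cV[R]_n) :
  vnorm2 (\sum_i F i) <= \sum_i vnorm2 (F i).
Proof.
elim/big_rec2: _ => [|i y M _ h]; first by rewrite vnorm2_0.
by apply: le_trans (vnorm2D _ _) _; rewrite lerD.
Qed.

Lemma opnorm_block p q (p_ : 'I_p -> nat) (q_ : 'I_q -> nat)
  (B : forall i j, 'M[R]_(p_ i, q_ j)) :
  opnorm (\mxblock_(i, j) B i j) <= Num.sqrt (\sum_i \sum_j opnorm (B i j) ^+ 2).
Proof.
have S0 : 0 <= \sum_i \sum_j opnorm (B i j) ^+ 2.
  by apply: sumr_ge0 => i _; apply: sumr_ge0 => j _; exact: sqr_ge0.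
apply: opnorm_le_sq; first exact: sqrtr_ge0.
move=> x; rewrite sqr_sqrtr //.
rewrite -[x]submxcolK mul_mxblock_mxrow ns_submxcol.
rewrite [ns (\mxcol__ _)]ns_submxcol mulr_suml; apply: ler_sum => i _.
rewrite mxcolK.
apply: le_trans (_ : (\sum_j opnorm (B i j) * vnorm2 (submxcol x j)) ^+ 2 <= _); last first.
  apply: le_trans (CS _ _) _; apply: ler_wpM2l.
    by apply: sumr_ge0 => j _; exact: sqr_ge0.
  by apply: ler_sum => j _; rewrite mxcolK ns_vnorm.
rewrite ns_vnorm; apply: lerXn2r; rewrite ?nnegrE ?vnorm2_ge0 //.
  by apply: sumr_ge0 => j _; rewrite mulr_ge0 ?opnorm_ge0 ?vnorm2_ge0.
apply: le_trans (vnorm2_sum _) _; apply: ler_sum => j _; exact: opnorm_ub.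
Qed.

Lemma sum_tens m n (F : 'I_(m * n) -> R) :
  \sum_k F k = \sum_i \sum_j F (mxtens_index (i, j)).
Proof.
rewrite (reindex (@mxtens_index m n)) /=; last first.
  by exists (@mxtens_unindex m n) => x _; [rewrite mxtens_indexK | rewrite mxtens_unindexK].
by rewrite pair_big /=; apply: eq_bigr => -[i j] _.
Qed.

Lemma frob2_col m n (W : 'M[R]_(m, n)) : frob2 W = \sum_b ns (col b W).
Proof.
rewrite /frob2 exchange_big; apply: eq_bigr => b _; apply: eq_bigr => i _.
by rewrite !mxE.
Qed.

Lemma frob2_tr m n (W : 'M[R]_(m, n)) : frob2 W^T = frob2 W.
Proof.
rewrite /frob2 exchange_big; apply: eq_bigr => b _; apply: eq_bigr => i _.
by rewrite !mxE.
Qed.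

Lemma ns_opnorm m n (M : 'M[R]_(m, n)) x : ns (M *m x) <= opnorm M ^+ 2 * ns x.
Proof.
rewrite !ns_vnorm -exprMn; apply: lerXn2r; last exact: opnorm_ub.
  by rewrite nnegrE vnorm2_ge0.
by rewrite nnegrE mulr_ge0 ?vnorm2_ge0 ?opnorm_ge0.
Qed.

Lemma frob2_mul m n p (X : 'M[R]_(m, n)) (W : 'M[R]_(n, p)) :
  frob2 (X *m W) <= opnorm X ^+ 2 * frob2 W.
Proof.
rewrite !frob2_col mulr_sumr; apply: ler_sum => b _.
have -> : col b (X *m W) = X *m col b W.
  by apply/matrixP => i j; rewrite !mxE; apply: eq_bigr => k _; rewrite !mxE.
exact: ns_opnorm.
Qed.

Lemma opnorm_tens m1 n1 m2 n2 (X : 'M[R]_(m1, n1)) (Y : 'M[R]_(m2, n2)) :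
  opnorm (X *t Y) <= opnorm X * opnorm Y.
Proof.
apply: opnorm_le_sq; first by rewrite mulr_ge0 ?opnorm_ge0.
move=> z.
set Z : 'M[R]_(n1, n2) := \matrix_(j, b) z (mxtens_index (j, b)) 0.
have E1 : ns z = frob2 Z.
  by rewrite /ns sum_tens; apply: eq_bigr => j _; apply: eq_bigr => b _; rewrite mxE.
have E2 : ns ((X *t Y) *m z) = frob2 (X *m (Z *m Y^T)).
  rewrite /ns sum_tens; apply: eq_bigr => i _; apply: eq_bigr => a _.
  congr (_ ^+ 2); rewrite !mxE sum_tens.
  under [RHS]eq_bigr do rewrite !mxE big_distrr /=.
  apply: eq_bigr => j _; apply: eq_bigr => b _.
  by rewrite tensmxE !mxE; ring.
rewrite E1 E2; apply: le_trans (frob2_mul _ _) _.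
rewrite exprMn -[_ ^+ 2 * _ ^+ 2 * _]mulrA ler_wpM2l ?sqr_ge0 //.
rewrite -frob2_tr trmx_mul trmxK -[frob2 Z]frob2_tr; exact: frob2_mul.
Qed.

End P3.


Section P4.
Variable R : realType.

Lemma telescope N (Y D : nat -> 'M[R]_N) k :
  \prod_(0 <= j < k) (Y j + D j) = \prod_(0 <= j < k) Y j +
    \sum_(m < k) (\prod_(0 <= j < m) (Y j + D j)) * D m * \prod_(m.+1 <= j < k) Y j.
Proof.
elim: k => [|k IH]; first by rewrite !big_geq // big_ord0 addr0.
rewrite big_nat_recr //= IH big_nat_recr //= big_ord_recr /= [X in _ * _ * X]big_geq // mulr1.
rewrite mulrDr mulrDl -addrA; congr (_ + _); congr (_ + _).
rewrite mulr_suml; apply: eq_bigr => m _.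
  by rewrite /= (@big_nat_recr _ _ _ k m.+1 _ (ltn_ord m)) /= !mulrA.
by rewrite IH.
Qed.

Lemma pert_prod N (Y D : nat -> 'M[R]_N) (kap xi e : R) :
  0 <= e ->
  (forall a L, opnorm (\prod_(a <= j < a + L) Y j) <= kap * xi ^+ L) ->
  (forall j, opnorm (D j) <= e) ->
  forall k, opnorm (\prod_(0 <= j < k) (Y j + D j)) <= kap * (xi + kap * e) ^+ k.
Proof.
move=> e0 hY hD k; elim/ltn_ind: k => k IH.
rewrite telescope; apply: le_trans (opnormD _ _) _.
have h0 := hY 0%N k; rewrite add0n in h0.
apply: (le_trans (lerD h0 (opnorm_sum _ _))).
apply: le_trans (_ : kap * xi ^+ k + \sum_(m < k) kap * (xi + kap * e) ^+ m * e *
      (kap * xi ^+ (k.-1 - m)) <= _).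
  apply: lerD => //; apply: ler_sum => m _.
  apply: le_trans (opnorm_mul _ _) _.
  apply: ler_pM; rewrite ?opnorm_ge0 //.
    apply: le_trans (opnorm_mul _ _) _.
    apply: ler_pM; rewrite ?opnorm_ge0 //; exact: IH.
  have := hY m.+1 (k.-1 - m)%N.
  have -> : (m.+1 + (k.-1 - m) = k)%N.
    by have := ltn_ord m; move: (nat_of_ord m) => mm; lia.
  done.
set c := xi + kap * e.
have E := subrXX xi c k.
have : \sum_(m < k) kap * c ^+ m * e * (kap * xi ^+ (k.-1 - m)) =
    kap * (kap * e) * \sum_(i < k) xi ^+ (k.-1 - i) * c ^+ i.
  by rewrite mulr_sumr; apply: eq_bigr => i _; ring.
move=> ->.
have -> : kap * e = c - xi by rewrite /c; ring.
have -> : kap * (c - xi) * \sum_(i < k) xi ^+ (k.-1 - i) * c ^+ i =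
   - kap * ((xi - c) * \sum_(i < k) xi ^+ (k.-1 - i) * c ^+ i) by ring.
rewrite -E le_eqVlt; apply/orP; left; apply/eqP; ring.
Qed.

End P4.


Section P5.
Variable R : realType.

Lemma char_poly_tr (F : comNzRingType) n (A : 'M[F]_n) : char_poly A^T = char_poly A.
Proof.
rewrite /char_poly -det_tr; congr (\det _); apply/matrixP => i j.
by rewrite !mxE eq_sym.
Qed.

Local Notation cC := (fun x : R => (x%:C)%C).

Lemma right_eig N (M : 'M[R]_N) (l : R[i]) :
  root (char_poly (map_mx cC M)) l ->
  exists2 x : 'cV[R[i]]_N, x != 0 & map_mx cC M *m x = l *: x.
Proof.
rewrite -char_poly_tr -eigenvalue_root_char => /eigenvalueP [v vM vn0].
exists v^T; first by rewrite trmx_eq0.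
by rewrite -[map_mx _ M]trmxK -trmx_mul vM linearZ.
Qed.

Definition cn2 (z : R[i]) : R := complex.Re z ^+ 2 + complex.Im z ^+ 2.

Lemma normcE (z : R[i]) : @Normc.normc R z = Num.sqrt (cn2 z).
Proof. by case: z. Qed.

Lemma cn2_ge0 z : 0 <= cn2 z.
Proof. by rewrite addr_ge0 ?sqr_ge0. Qed.

Lemma cn2E z : cn2 z = @Normc.normc R z ^+ 2.
Proof. by rewrite normcE sqr_sqrtr // cn2_ge0. Qed.

Lemma normc_ge0 z : 0 <= @Normc.normc R z.
Proof. by rewrite normcE sqrtr_ge0. Qed.

Lemma normcX z k : @Normc.normc R (z ^+ k) = @Normc.normc R z ^+ k.
Proof.
elim: k => [|k IH]; first by rewrite !expr0 Normc.normc1.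
by rewrite !exprS Normc.normcM IH.
Qed.

Lemma cn2M z w : cn2 (z * w) = cn2 z * cn2 w.
Proof. by rewrite !cn2E Normc.normcM exprMn. Qed.

Lemma mulC_real (p : R) (z : R[i]) :
  (p%:C)%C * z = ((p * complex.Re z) +i* (p * complex.Im z))%C.
Proof.
by case: z => a b; apply/eqP; rewrite eq_complex /= !mul0r subr0 addr0 !eqxx.
Qed.

Lemma eig_bound N (M : 'M[R]_N) (l : R[i]) :
  root (char_poly (map_mx cC M)) l ->
  forall k, @Normc.normc R l ^+ k <= opnorm (M ^+ k).
Proof.
move=> /right_eig [x xn0 hx] k.
have hxk : map_mx cC (M ^+ k) *m x = l ^+ k *: x.
  rewrite (rmorphXn (map_mx (real_complex R))) /=.
  elim: k => [|k IH]; first by rewrite !expr0 mul1mx scale1r.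
  by rewrite exprSr -mulmxA hx -scalemxAr IH scalerA exprSr mulrC.
set P := M ^+ k in hxk *.
set a : 'cV[R]_N := \col_j complex.Re (x j 0).
set b : 'cV[R]_N := \col_j complex.Im (x j 0).
have entry : forall i, (map_mx cC P *m x) i 0 = ((P *m a) i 0 +i* (P *m b) i 0)%C.
  move=> i; rewrite !mxE.
  elim/big_rec3: _ => [//|j y1 y2 y3 _ ->].
  by rewrite !mxE mulC_real.
have S1 : \sum_i cn2 ((map_mx cC P *m x) i 0) = ns (P *m a) + ns (P *m b).
  by rewrite /ns -big_split; apply: eq_bigr => i _; rewrite entry.
have S2 : \sum_i cn2 ((map_mx cC P *m x) i 0) =
    @Normc.normc R l ^+ k ^+ 2 * (ns a + ns b).
  rewrite hxk /ns -big_split mulr_sumr; apply: eq_bigr => i _.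
  by rewrite mxE cn2M cn2E normcX !mxE.
have Sp : 0 < ns a + ns b.
  rewrite lt0r addr_ge0 ?ns_ge0 // andbT; apply: contra xn0 => /eqP h.
  apply/eqP/matrixP => i j; rewrite ord1 mxE.
  have h' : \sum_i cn2 (x i 0) = ns a + ns b.
    by rewrite /ns -big_split /=; apply: eq_bigr => i' _; rewrite !mxE.
  rewrite h in h'.
  have := psumr_eq0P (fun i _ => cn2_ge0 (x i 0)) h' (i := i) isT.
  rewrite cn2E => /eqP; rewrite sqrf_eq0 => /eqP; exact: Normc.eq0_normc.
have B : @Normc.normc R l ^+ k ^+ 2 * (ns a + ns b) <= opnorm P ^+ 2 * (ns a + ns b).
  rewrite -S2 S1 mulrDr; apply: lerD; exact: ns_opnorm.
rewrite ler_pM2r // in B.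
rewrite -(@ler_pXn2r _ 2) ?nnegrE ?opnorm_ge0 ?exprn_ge0 ?normc_ge0 //.
Qed.

Local Open Scope classical_set_scope.

Lemma specrad_ge0 N (M : 'M[R]_N) : 0 <= specrad M.
Proof.
rewrite /specrad.
set E := [set @Normc.normc R l | l in [set l : R[i] | root (char_poly (map_mx cC M)) l]].
have [[l hl]|nl] := pselect (exists l : R[i], root (char_poly (map_mx cC M)) l).
  have hs : has_sup E.
    split; first by exists (@Normc.normc R l); exists l.
    exists (opnorm M) => _ [z /= hz <-].
    by have := eig_bound hz 1; rewrite !expr1.
  apply: le_trans (normc_ge0 l) _; apply: (sup_upper_bound hs); by exists l.
have -> : E = set0 by rewrite -subset0 => _ [z /= hz _]; apply: nl; exists z.
by rewrite sup0.
Qed.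

Lemma pow_unbounded (q K : R) : 1 < q -> exists k, K < q ^+ k.
Proof.
move=> q1.
have bern : forall k, 1 + k%:R * (q - 1) <= q ^+ k.
  elim=> [|k IH]; first by rewrite expr0 mul0r addr0.
  rewrite exprS -natr1.
  have h : 0 <= q - 1 by lra.
  have h3 : 0 <= k%:R * (q - 1) ^+ 2 by rewrite mulr_ge0 ?sqr_ge0.
  apply: le_trans (_ : q * (1 + k%:R * (q - 1)) <= _); last first.
    by rewrite ler_wpM2l //; lra.
  have -> : q * (1 + k%:R * (q - 1)) = 1 + (k%:R + 1) * (q - 1) + k%:R * (q - 1) ^+ 2 by ring.
  lra.
have q0 : 0 < q - 1 by lra.
have hb := @archi_boundP _ (`|K| / (q - 1)) (divr_ge0 (normr_ge0 K) (ltW q0)).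
exists (Num.Def.archi_bound (`|K| / (q - 1))).
apply: lt_le_trans (bern _).
rewrite ltr_pdivrMr // in hb.
have := ler_norm K; lra.
Qed.

Lemma specrad_le_gen N (M : 'M[R]_N) K c : 0 <= c ->
  (forall l, root (char_poly (map_mx cC M)) l ->
     forall k, @Normc.normc R l ^+ k <= K * c ^+ k) -> specrad M <= c.
Proof.
move=> c0 hbb; rewrite /specrad.
set E := [set @Normc.normc R l | l in [set l : R[i] | root (char_poly (map_mx cC M)) l]].
have [[l0 hl0]|nl] := pselect (exists l : R[i], root (char_poly (map_mx cC M)) l).
  apply: ge_sup; first by exists (@Normc.normc R l0); exists l0.
  move=> _ [l /= hl <-].
  have hb k : @Normc.normc R l ^+ k <= K * c ^+ k := hbb l hl k.
  rewrite leNgt; apply/negP => lc.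
  have [c00|cp] := eqVneq c 0.
    by have := hb 1%N; rewrite expr1 c00 expr1 mulr0 => h1; move: lc; rewrite c00 ltNge h1.
  have cp' : 0 < c by rewrite lt0r cp c0.
  have [k hk] : exists k, K < (@Normc.normc R l / c) ^+ k.
    by apply: pow_unbounded; rewrite ltr_pdivlMr // mul1r.
  have := hb k; rewrite -ler_pdivrMr ?exprn_gt0 // -expr_div_n => hk'.
  by move: hk; rewrite ltNge hk'.
have -> : E = set0 by rewrite -subset0 => _ [z /= hz _]; apply: nl; exists z.
by rewrite sup0.
Qed.

Lemma specrad_le N (M : 'M[R]_N) K c : 0 <= c ->
  (forall k, opnorm (M ^+ k) <= K * c ^+ k) -> specrad M <= c.
Proof.
move=> c0 h; apply: (specrad_le_gen (K := K)) => // l hl k.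
exact: le_trans (eig_bound hl k) (h k).
Qed.

End P5.


Section P6.
Variable R : realType.
Local Open Scope classical_set_scope.

Lemma lim_ncvg (u : nat -> R) : ~ cvgn u -> limn u = 0.
Proof.
move=> h; rewrite /lim /lim_in xgetPN // => l hl; apply: h; exact: cvgP hl.
Qed.

Lemma jsr_ge0 (I : finType) n (A : I -> 'M[R]_n) : 0 <= jsr A.
Proof.
rewrite /jsr.
have [cu|ncu] := pselect (cvgn (fun k : nat =>
     powR (\big[Num.max/0]_(w : {ffun 'I_k -> I}) opnorm (prodmx A w)) (k%:R^-1))).
  by apply: limr_ge => //; apply: nearW => k; exact: powR_ge0.
by rewrite lim_ncvg.
Qed.

Lemma powR_pow_inv (x : R) k : 0 <= x -> (0 < k)%N -> powR (x ^+ k) (k%:R^-1) = x.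
Proof.
move=> x0 k0; rewrite -powR_mulrn // -powRrM mulfV ?powRr1 //.
by rewrite pnatr_eq0 -lt0n.
Qed.

Lemma jsr_le (I : finType) n (A : I -> 'M[R]_n) K c : 0 <= c ->
  (forall k (w : {ffun 'I_k -> I}), opnorm (prodmx A w) <= K * c ^+ k) -> jsr A <= c.
Proof.
move=> c0 h.
have K0 : 0 <= K.
  have := h 0%N (ffun0 (card_ord 0)); rewrite expr0 mulr1; apply: le_trans.
  exact: opnorm_ge0.
rewrite /jsr.
have [cu|ncu] := pselect (cvgn (fun k : nat =>
     powR (\big[Num.max/0]_(w : {ffun 'I_k -> I}) opnorm (prodmx A w)) (k%:R^-1))); last first.
  by rewrite lim_ncvg.
apply/ler_addgt0Pr => e e0.
apply: limr_le => //.
set d := e / (c + 1).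
have d0 : 0 < d by rewrite divr_gt0 // ltr_wpDl.
have [k0 hk0] : exists k0, K < (1 + d) ^+ k0 by apply: pow_unbounded; lra.
apply: filterS (nbhs_infty_ge (maxn 1 k0)) => k /= hk.
have k1 : (0 < k)%N by move: hk; rewrite geq_max => /andP[].
have kk0 : (k0 <= k)%N by move: hk; rewrite geq_max => /andP[].
have hmax : \big[Num.max/0]_(w : {ffun 'I_k -> I}) opnorm (prodmx A w) <= ((1 + d) * c) ^+ k.
  apply: bigmax_le; first by rewrite exprn_ge0 // mulr_ge0 //; lra.
  move=> w _; apply: le_trans (h k w) _.
  rewrite exprMn ler_wpM2r ?exprn_ge0 //.
  apply: le_trans (ltW hk0) _; apply: ler_weXn2l => //; lra.
apply: le_trans (_ : powR (((1 + d) * c) ^+ k) (k%:R^-1) <= _).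
  apply: ge0_ler_powR => //; rewrite ?nnegrE ?invr_ge0 ?ler0n //.
    by elim/big_rec: _ => [//| w y _ hy]; rewrite le_max hy orbT.
  by rewrite exprn_ge0 // mulr_ge0 //; lra.
rewrite powR_pow_inv //; last by rewrite mulr_ge0 //; lra.
rewrite mulrDl mul1r lerD2l /d.
have -> : e / (c + 1) * c = e * (c / (c + 1)) by rewrite mulrAC mulrA.
rewrite ler_piMr //; first lra.
rewrite ler_pdivrMr; lra.
Qed.

End P6.


Section P7.
Variable R : realType.

Lemma pow_pert N (M M' : 'M[R]_N) tau rho e : 0 <= e -> opnorm (M' - M) <= e ->
  (forall k, opnorm (M ^+ k) <= tau * rho ^+ k) ->
  forall k, opnorm (M' ^+ k) <= tau * (rho + tau * e) ^+ k.
Proof.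
move=> e0 hD hM k.
have := @pert_prod R N (fun _ => M) (fun _ => M' - M) tau rho e e0 _ (fun _ => hD) k.
rewrite prodr_const_nat subn0 addrC subrK; apply.
by move=> a L; rewrite prodr_const_nat addKn.
Qed.

Lemma prodmxE (I : finType) n k (A : I -> 'M[R]_n) (w : {ffun 'I_k -> I}) :
  prodmx A w = \prod_(j < k) A (w j).
Proof. by []. Qed.

Lemma word_pert (I : finType) n (A A' : I -> 'M[R]_n) kap xi e : 0 <= e ->
  (forall i, opnorm (A' i - A i) <= e) ->
  (forall k (w : {ffun 'I_k -> I}), opnorm (prodmx A w) <= kap * xi ^+ k) ->
  forall k (w : {ffun 'I_k -> I}), opnorm (prodmx A' w) <= kap * (xi + kap * e) ^+ k.
Proof.
move=> e0 hD hA [|k] w.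
  have := hA 0%N w; rewrite !prodmxE !big_ord0 !expr0 //.
pose f j := w (inord j).
have := @pert_prod R n (fun j => A (f j)) (fun j => A' (f j) - A (f j)) kap xi e e0 _
   (fun j => hD (f j)) k.+1.
have -> : \prod_(0 <= j < k.+1) (A (f j) + (A' (f j) - A (f j))) = prodmx A' w.
  rewrite prodmxE big_mkord; apply: eq_bigr => i _.
  by rewrite addrC subrK /f inord_val.
apply => a L.
have := hA L [ffun i : 'I_L => f (a + i)%N]; apply: le_trans.
rewrite prodmxE -{1}[a]add0n big_addn addKn big_mkord.
rewrite le_eqVlt; apply/orP; left; apply/eqP; congr opnorm.
by apply: eq_bigr => i _; rewrite ffunE addnC.
Qed.

End P7.


Section P8.
Variable R : realType.

Lemma minkowski (I : finType) (x y : I -> R) :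
  Num.sqrt (\sum_i (x i + y i) ^+ 2) <=
  Num.sqrt (\sum_i x i ^+ 2) + Num.sqrt (\sum_i y i ^+ 2).
Proof.
have hx : 0 <= \sum_i x i ^+ 2 by apply: sumr_ge0 => i _; exact: sqr_ge0.
have hy : 0 <= \sum_i y i ^+ 2 by apply: sumr_ge0 => i _; exact: sqr_ge0.
set sx := Num.sqrt (\sum_i x i ^+ 2); set sy := Num.sqrt (\sum_i y i ^+ 2).
rewrite -[sx + sy]ger0_norm ?addr_ge0 ?sqrtr_ge0 // -sqrtr_sqr ler_sqrt ?sqr_ge0 //.
have hc := CS x y.
have e : \sum_i (x i + y i) ^+ 2 = \sum_i x i ^+ 2 + \sum_i y i ^+ 2 + 2 * \sum_i x i * y i.
  rewrite mulr_sumr -!big_split /=; apply: eq_bigr => i _; ring.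
rewrite e sqrrD !sqr_sqrtr //.
suff : \sum_i x i * y i <= sx * sy by lra.
apply: le_trans (ler_norm _) _.
rewrite -sqrtr_sqr -[sx * sy]ger0_norm ?mulr_ge0 ?sqrtr_ge0 // -sqrtr_sqr.
rewrite ler_sqrt ?sqr_ge0 // exprMn !sqr_sqrtr //.
Qed.

Lemma Abar_max_ge0 s n (A : 'I_s -> 'M[R]_n) : 0 <= Abar_max A.
Proof. by rewrite /Abar_max; elim/big_rec: _ => [//| w y _ hy]; rewrite le_max hy orbT. Qed.

Lemma Abar_max_ub s n (A : 'I_s -> 'M[R]_n) j : opnorm (A j) <= Abar_max A.
Proof. exact: le_bigmax. Qed.

Lemma tens_diff m n (X X' : 'M[R]_(m, n)) :
  X' *t X' - X *t X = (X' - X) *t X' + X *t (X' - X).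
Proof. by apply/matrixP => i j; rewrite !mxE; ring. Qed.

Lemma nested_pair (m n : nat) (F : 'I_m -> 'I_n -> R) :
  \sum_i \sum_j F i j = \sum_(p : 'I_m * 'I_n) F p.1 p.2.
Proof. by rewrite pair_big. Qed.

Lemma aug_pert s n (T T' : 'M[R]_s) (A A' : 'I_s -> 'M[R]_n) epsA epsT :
  (forall j i, 0 <= T' j i) -> (forall j, \sum_i T' j i = 1) ->
  \sum_j opnorm (A' j - A j) <= epsA ->
  frobn (T' - T) <= epsT ->
  opnorm (aug T' A' - aug T A) <= eps_rho A epsA epsT.
Proof.
move=> T0 T1 hA hT.
set Ab := Abar_max A.
set d := fun j => opnorm (A' j - A j).
have d0 : forall j, 0 <= d j by move=> j; exact: opnorm_ge0.
have eA : 0 <= epsA by apply: le_trans hA; apply: sumr_ge0 => j _; exact: opnorm_ge0.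
have eT : 0 <= epsT by apply: le_trans hT; exact: sqrtr_ge0.
have Ab0 : 0 <= Ab := Abar_max_ge0 A.
have dle : forall j, d j <= epsA.
  move=> j0; apply: le_trans hA; rewrite (bigD1 j0) //= lerDl sumr_ge0 // => i _; exact: opnorm_ge0.
have T'le : forall j i, T' j i <= 1.
  move=> j0 i0; rewrite -(T1 j0) (bigD1 i0) //= lerDl sumr_ge0 //.
pose x i j := T' j i * (d j * (2 * Ab + epsA)).
pose y i j := `|(T' - T) j i| * Ab ^+ 2.
have blk : forall i j, opnorm (T' j i *: (A' j *t A' j) - T j i *: (A j *t A j)) <= x i j + y i j.
  move=> i j.
  have -> : T' j i *: (A' j *t A' j) - T j i *: (A j *t A j) =
     T' j i *: (A' j *t A' j - A j *t A j) + (T' - T) j i *: (A j *t A j).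
    by rewrite !mxE scalerBr scalerBl addrA subrK.
  apply: le_trans (opnormD _ _) _; apply: lerD.
    apply: le_trans (opnormZ _ _) _; rewrite ger0_norm //; apply: ler_wpM2l => //.
    rewrite tens_diff; apply: le_trans (opnormD _ _) _.
    apply: le_trans (lerD (opnorm_tens _ _) (opnorm_tens _ _)) _.
    have hA' : opnorm (A' j) <= Ab + d j.
      have -> : A' j = A j + (A' j - A j) by rewrite addrC subrK.
      by apply: le_trans (opnormD _ _) _; rewrite lerD // Abar_max_ub.
    have hAj : opnorm (A j) <= Ab by exact: Abar_max_ub.
    have h1 := dle j; have h2 := d0 j; rewrite /d in h1 h2 hA'.
    have h3 := opnorm_ge0 (A j); have h4 := opnorm_ge0 (A' j).
    rewrite /d; nra.
  apply: le_trans (opnormZ _ _) _; apply: ler_wpM2l => //.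
  apply: le_trans (opnorm_tens _ _) _; rewrite expr2.
  by apply: ler_pM; rewrite ?opnorm_ge0 // Abar_max_ub.
rewrite /aug -mxblockB; apply: le_trans (opnorm_block _) _.
have [s0|sp] := posnP s.
  rewrite big1 ?sqrtr0; last by move=> [i hi]; exfalso; move: hi; rewrite s0.
  rewrite /eps_rho -/Ab mulr_ge0 ?sqrtr_ge0 // addr_ge0 // mulr_ge0 ?sqr_ge0 //.
  by rewrite addr_ge0 // mulr_ge0.
apply: le_trans (_ : Num.sqrt (\sum_i \sum_j (x i j + y i j) ^+ 2) <= _).
  rewrite ler_sqrt; last by apply: sumr_ge0 => i _; apply: sumr_ge0 => j _; exact: sqr_ge0.
  apply: ler_sum => i _; apply: ler_sum => j _.
  apply: lerXn2r; rewrite ?nnegrE ?opnorm_ge0 //.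
  by rewrite addr_ge0 // mulr_ge0 // mulr_ge0 //; lra.
rewrite (nested_pair (fun i j => (x i j + y i j) ^+ 2)).
apply: le_trans (minkowski (fun p => x p.1 p.2) (fun p => y p.1 p.2)) _.
rewrite -(nested_pair (fun i j => x i j ^+ 2)) -(nested_pair (fun i j => y i j ^+ 2)).
have c0 : 0 <= 2 * Ab + epsA by lra.
have X : Num.sqrt (\sum_i \sum_j x i j ^+ 2) <= (2 * Ab + epsA) * epsA.
  rewrite -[X in _ <= X]ger0_norm ?mulr_ge0 // -sqrtr_sqr ler_sqrt ?sqr_ge0 //.
  rewrite exchange_big /=.
  apply: le_trans (_ : \sum_j (d j * (2 * Ab + epsA)) ^+ 2 <= _).
    apply: ler_sum => j _; rewrite /x.
    under eq_bigr do rewrite exprMn.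
    rewrite -mulr_suml; apply: ler_piMl; first exact: sqr_ge0.
    rewrite -(T1 j); apply: ler_sum => i _; rewrite expr2; apply: ler_piMl => //.
  under eq_bigr do rewrite exprMn.
  rewrite -mulr_suml [X in _ <= X]exprMn mulrC ler_wpM2l ?sqr_ge0 //.
  apply: le_trans (_ : \sum_j d j * epsA <= _).
    by apply: ler_sum => j _; rewrite expr2 ler_wpM2l.
  by rewrite -mulr_suml expr2 ler_wpM2r.
have Y : Num.sqrt (\sum_i \sum_j y i j ^+ 2) <= Ab ^+ 2 * epsT.
  have -> : \sum_i \sum_j y i j ^+ 2 = (Ab ^+ 2) ^+ 2 * frob2 (T' - T).
    rewrite /frob2 exchange_big mulr_sumr; apply: eq_bigr => j _.
    rewrite mulr_sumr; apply: eq_bigr => i _.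
    by rewrite /y exprMn real_normK ?num_real // mulrC.
  rewrite sqrt_mul_sq ?sqr_ge0 // ler_wpM2l ?sqr_ge0 //.
apply: le_trans (lerD X Y) _.
rewrite /eps_rho -/Ab -[X in X <= _]mul1r ler_wpM2r //.
  by rewrite addr_ge0 // mulr_ge0 ?sqr_ge0 //; lra.
have hs1 : (1 : R) <= s%:R by rewrite ler1n.
apply: le_trans (_ : Num.sqrt 1 <= _); first by rewrite sqrtr1.
by rewrite ler_sqrt.
Qed.

End P8.


Section P9.
Variable R : realType.
Variables (s r : nat) (lab : 'I_s -> 'I_r).

Lemma csizeE k : csize R lab k = #|[pred i | lab i == k]|%:R.
Proof. by rewrite /csize; congr (_%:R); apply: eq_card => i; rewrite /in_mem /mem /= /in_set /mkset asboolb. Qed.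

Lemma sum_class_const (V : lmodType R) k (x : V) :
  \sum_(i | lab i == k) x = csize R lab k *: x.
Proof. by rewrite csizeE scaler_nat -sumr_const. Qed.

Lemma csize_ge0 k : 0 <= csize R lab k.
Proof. by rewrite csizeE ler0n. Qed.

Lemma csize_ge1 j : 1 <= csize R lab (lab j).
Proof. by rewrite csizeE ler1n; apply/card_gt0P; exists j; rewrite inE /=. Qed.

Lemma csize_gt0 j : 0 < csize R lab (lab j).
Proof. exact: lt_le_trans ltr01 (csize_ge1 j). Qed.

Lemma part_sum (V : nmodType) (F : 'I_s -> V) :
  \sum_j F j = \sum_(k < r) \sum_(j | lab j == k) F j.
Proof. by rewrite (partition_big lab predT). Qed.

Lemma delta_sum n (A : 'I_s -> 'M[R]_n) epsA :
  clust_close lab A epsA ->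
  \sum_j opnorm (exp_mats lab A j - A j) <= epsA.
Proof.
move=> hc; apply: le_trans hc.
rewrite part_sum; apply: ler_sum => k _.
rewrite exchange_big /=.
apply: ler_sum => j /eqP ljk.
have cp := csize_gt0 j; rewrite ljk in cp.
have -> : exp_mats lab A j - A j =
    (csize R lab k)^-1 *: \sum_(i | lab i == k) (A i - A j).
  rewrite /exp_mats /red_mats ljk sumrB sum_class_const scalerBr scalerA mulVf ?scale1r //.
  exact: lt0r_neq0.
apply: le_trans (opnormZ _ _) _.
rewrite ger0_norm ?invr_ge0 ?csize_ge0 //.
apply: le_trans (_ : \sum_(i | lab i == k) opnorm (A i - A j) <= _).
  apply: le_trans (ler_wpM2l _ (opnorm_sum _ _)) _; first by rewrite invr_ge0 ltW.
  apply: ler_piMl; first by apply: sumr_ge0 => i _; exact: opnorm_ge0.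
  by rewrite invr_le1 ?unitfE ?lt0r_neq0 // -ljk csize_ge1.
by apply: ler_sum => i _; exact: opnorm_frobn.
Qed.

End P9.


Section P10.
Variable R : realType.
Variables (s r : nat) (lab : 'I_s -> 'I_r) (T : 'M[R]_s).
Hypothesis Tm : markov T.
Hypothesis hp : is_partition lab.

Definition Sb i l := \sum_(j | lab j == l) T i j.
Local Notation Th := (red_markov lab T).

Definition Tbar : 'M[R]_s := \matrix_(i, j)
  (if Sb i (lab j) == 0 then Th (lab i) (lab j) / csize R lab (lab j)
   else T i j * (Th (lab i) (lab j) / Sb i (lab j))).

Lemma T_ge0 i j : 0 <= T i j. Proof. by case: Tm. Qed.
Lemma T_row i : \sum_j T i j = 1. Proof. by case: Tm. Qed.

Lemma Sb_ge0 i l : 0 <= Sb i l.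
Proof. by apply: sumr_ge0 => j _; exact: T_ge0. Qed.

Lemma ThE k l : Th k l = (csize R lab k)^-1 * \sum_(i | lab i == k) Sb i l.
Proof. by rewrite mxE. Qed.

Lemma Th_ge0 k l : 0 <= Th k l.
Proof.
rewrite ThE mulr_ge0 ?invr_ge0 ?csize_ge0 //.
by apply: sumr_ge0 => i _; exact: Sb_ge0.
Qed.

Lemma csize_cls_gt0 l : 0 < csize R lab l.
Proof. by have [j <-] := hp l; exact: csize_gt0. Qed.

Lemma Tbar_ge0 i j : 0 <= Tbar i j.
Proof.
rewrite mxE; case: ifP => _.
  by rewrite divr_ge0 ?Th_ge0 ?csize_ge0.
by rewrite mulr_ge0 ?T_ge0 // divr_ge0 ?Th_ge0 ?Sb_ge0.
Qed.

Lemma Tbar_block i l : \sum_(j | lab j == l) Tbar i j = Th (lab i) l.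
Proof.
rewrite (eq_bigr (fun j => if Sb i l == 0 then Th (lab i) l / csize R lab l
   else T i j * (Th (lab i) l / Sb i l))); last by move=> j /eqP <-; rewrite mxE.
have cp := csize_cls_gt0 l.
case: eqP => hS.
  by rewrite sum_class_const /GRing.scale /= mulrCA mulfV ?mulr1 // lt0r_neq0.
by rewrite -mulr_suml -/(Sb i l) mulrCA mulfV ?mulr1 //; apply/eqP.
Qed.

Lemma Th_row k : (exists j, lab j = k) -> \sum_l Th k l = 1.
Proof.
move=> [j0 hj0].
have cp : 0 < csize R lab k by rewrite -hj0; exact: csize_gt0.
under eq_bigr do rewrite ThE.
rewrite -mulr_sumr exchange_big /=.
under eq_bigr do rewrite /Sb -part_sum T_row.
by rewrite sum_class_const /GRing.scale /= mulr1 mulVf // lt0r_neq0.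
Qed.

Lemma Tbar_markov : markov Tbar.
Proof.
split; first exact: Tbar_ge0.
move=> i; rewrite (part_sum lab).
under eq_bigr do rewrite Tbar_block.
by apply: Th_row; exists i.
Qed.

Lemma Tbar_l1 i l :
  \sum_(j | lab j == l) `|Tbar i j - T i j| = `|Th (lab i) l - Sb i l|.
Proof.
rewrite (eq_bigr (fun j => `|(if Sb i l == 0 then Th (lab i) l / csize R lab l
   else T i j * (Th (lab i) l / Sb i l)) - T i j|)); last by move=> j /eqP <-; rewrite mxE.
have cp := csize_cls_gt0 l.
have t0 := Th_ge0 (lab i) l.
case: eqP => hS.
  have T0 : forall j, lab j == l -> T i j = 0.
    by move=> j hj; apply: (psumr_eq0P (fun j _ => T_ge0 i j) hS).
  rewrite (eq_bigr (fun _ => Th (lab i) l / csize R lab l)); last first.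
    by move=> j hj; rewrite T0 // subr0 ger0_norm // divr_ge0 // ltW.
  rewrite sum_class_const /GRing.scale /= mulrCA mulfV ?mulr1 ?lt0r_neq0 //.
  by rewrite hS subr0 ger0_norm.
have Sp : 0 < Sb i l by rewrite lt0r Sb_ge0 andbT; apply/eqP.
rewrite (eq_bigr (fun j => T i j * `|Th (lab i) l / Sb i l - 1|)); last first.
  move=> j _; rewrite -{2}[T i j]mulr1 -mulrBr normrM ger0_norm //; exact: T_ge0.
rewrite -mulr_suml -/(Sb i l) -{1}[Sb i l]ger0_norm ?ltW // -normrM.
by rewrite mulrBr mulr1 mulrCA mulfV ?mulr1 // lt0r_neq0.
Qed.

Lemma sq_sum_le (I : finType) (a : I -> R) : (forall i, 0 <= a i) ->
  \sum_i a i ^+ 2 <= (\sum_i a i) ^+ 2.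
Proof.
move=> a0; rewrite [X in _ <= X]expr2 mulr_suml; apply: ler_sum => i _.
rewrite expr2 ler_wpM2l //; rewrite (bigD1 i) //= lerDl sumr_ge0 //.
Qed.

Lemma frobn_l1 m n (M : 'M[R]_(m, n)) : frobn M <= \sum_i \sum_j `|M i j|.
Proof.
have h0 : 0 <= \sum_i \sum_j `|M i j|.
  by apply: sumr_ge0 => i _; apply: sumr_ge0 => j _.
rewrite frobnE -[X in _ <= X]ger0_norm // -sqrtr_sqr ler_sqrt ?sqr_ge0 //.
rewrite /frob2 (nested_pair (fun i j => `|M i j|)).
have -> : \sum_i \sum_j M i j ^+ 2 = \sum_(p : 'I_m * 'I_n) `|M p.1 p.2| ^+ 2.
  by rewrite pair_big /=; apply: eq_bigr => -[i j] _; rewrite real_normK ?num_real.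
by apply: sq_sum_le => p.
Qed.

Lemma Th_dev i l :
  `|Th (lab i) l - Sb i l| <= \sum_(i' | lab i' == lab i) `|Sb i' l - Sb i l|.
Proof.
have cp := @csize_gt0 R _ _ lab i.
have -> : Th (lab i) l - Sb i l =
   (csize R lab (lab i))^-1 * \sum_(i' | lab i' == lab i) (Sb i' l - Sb i l).
  rewrite ThE sumrB (@sum_class_const R _ _ lab R^o) mulrBr.
  by congr (_ - _); rewrite /GRing.scale /= mulrA mulVf ?mul1r // lt0r_neq0.
rewrite normrM (ger0_norm (_ : 0 <= (csize R lab (lab i))^-1)); last by rewrite invr_ge0 ltW.
apply: le_trans (ler_wpM2l _ (ler_norm_sum _ _ _)) _; first by rewrite invr_ge0 ltW.
apply: ler_piMl; first by apply: sumr_ge0.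
by rewrite invr_le1 ?unitfE ?lt0r_neq0 // csize_ge1.
Qed.

Lemma lump_frob epsT : approx_lumpable lab T epsT -> frobn (Tbar - T) <= epsT.
Proof.
move=> hl; apply: le_trans (frobn_l1 _) _.
apply: le_trans hl.
have -> : \sum_i \sum_j `|(Tbar - T) i j| =
    \sum_i \sum_l `|Th (lab i) l - Sb i l|.
  apply: eq_bigr => i _; rewrite (part_sum lab); apply: eq_bigr => l _.
  by rewrite -Tbar_l1; apply: eq_bigr => j _; rewrite !mxE.
apply: le_trans (_ : \sum_i \sum_l \sum_(i' | lab i' == lab i) `|Sb i' l - Sb i l| <= _).
  by apply: ler_sum => i _; apply: ler_sum => l _; exact: Th_dev.
rewrite (part_sum lab); apply: ler_sum => k _.
rewrite exchange_big /=; apply: ler_sum => l _.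
rewrite le_eqVlt; apply/orP; left; apply/eqP.
apply: eq_bigr => i /eqP lik; rewrite lik; apply: eq_bigr => i' _.
by rewrite distrC.
Qed.

Lemma agg_lump epsT : approx_aggregatable lab T epsT -> approx_lumpable lab T epsT.
Proof.
move=> ha; apply: le_trans ha.
apply: ler_sum => k _.
rewrite exchange_big /=; apply: ler_sum => i _.
rewrite exchange_big /=; apply: ler_sum => i' _.
rewrite (part_sum lab (fun j => `|T i j - T i' j|)); apply: ler_sum => l _.
by rewrite -sumrB; apply: ler_norm_sum.
Qed.

End P10.


Section P11.
Variable R : realType.
Local Notation cC := (fun x : R => (x%:C)%C).

Lemma map_aug s n (T : 'M[R]_s) (A : 'I_s -> 'M[R]_n) :
  map_mx cC (aug T A) =
  \mxblock_(i < s, j < s) (cC (T j i) *: map_mx cC (A j *t A j)).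
Proof. by apply/matrixP => a b; rewrite !mxE rmorphM. Qed.

Lemma submxrowZ (F : fieldType) q (q_ : 'I_q -> nat) m (c : F) (v : 'M[F]_(m, \sum_i q_ i)) j :
  submxrow (c *: v) j = c *: submxrow v j.
Proof. by apply/matrixP => a b; rewrite !mxE. Qed.

Lemma lift_root s r n (lab : 'I_s -> 'I_r) (Tb : 'M[R]_s) (Th : 'M[R]_r)
  (Ah : 'I_r -> 'M[R]_n) :
  is_partition lab ->
  (forall i l, \sum_(j | lab j == l) Tb i j = Th (lab i) l) ->
  forall z : R[i], root (char_poly (map_mx cC (aug Th Ah))) z ->
     root (char_poly (map_mx cC (aug Tb (fun i => Ah (lab i))))) z.
Proof.
move=> hp hb z.
rewrite -!eigenvalue_root_char => /eigenvalueP [v hv vn0]; apply/eigenvalueP.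
pose u := \mxrow_(i < s) submxrow v (lab i).
have key : forall j, \sum_i submxrow v (lab i) *m
     (cC (Tb j i) *: map_mx cC (Ah (lab j) *t Ah (lab j))) =
     z *: submxrow v (lab j).
  move=> j.
  have := congr1 (fun M => submxrow M (lab j)) hv.
  rewrite /= -{1}[v]submxrowK map_aug mul_mxrow_mxblock mxrowK submxrowZ => <-.
  rewrite (part_sum lab); apply: eq_bigr => l _.
  rewrite (eq_bigr (fun i => cC (Tb j i) *: (submxrow v l *m
       map_mx cC (Ah (lab j) *t Ah (lab j))))); last first.
    by move=> i /eqP <-; rewrite scalemxAr.
  by rewrite -scaler_suml -rmorph_sum /= hb scalemxAr.
exists u.
  apply/mxrowP => j.
  by rewrite map_aug mul_mxrow_mxblock mxrowK submxrowZ mxrowK key.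
apply: contra vn0 => /eqP u0.
apply/eqP; rewrite -[v]submxrowK.
rewrite (_ : (fun k => submxrow v k) = fun k => 0); first exact: mxrow0.
apply: funext => k; have [i <-] := hp k.
by rewrite -[submxrow v (lab i)](@mxrowK _ _ _ _ (fun i => submxrow v (lab i))) -/u u0 submxrow0.
Qed.

End P11.

End Aux.
Import Aux.

Theorem theorem5 (R : realType) (n p s r : nat)
  (A : 'I_s -> 'M[R]_n) (B : 'I_s -> 'M[R]_(n, p)) (T : 'M[R]_s)
  (lab : 'I_s -> 'I_r) (epsA epsB epsT : R) :
  ergodic T ->
  is_partition lab ->
  clust_close lab A epsA ->
  clust_close lab B epsB ->
  (approx_lumpable lab T epsT \/ approx_aggregatable lab T epsT) ->
  let Ahat := red_mats lab A in
  let That := red_markov lab T in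
  let Abar := exp_mats lab A in
  let calA := aug T A in
  let calAhat := aug That Ahat in
  let erho := eps_rho A epsA epsT in
  (* (T1) MSS *)
  (forall rho tau : R,
     specrad calA <= rho ->
     (forall k : nat, opnorm (calA ^+ k) <= tau * rho ^+ k) ->
     specrad calAhat - specrad calA <= tau * erho + (rho - specrad calA))
  /\
  (forall Tbar : 'M[R]_s,
     markov Tbar ->
     infnorm (Tbar - T) <= epsT ->
     frobn (Tbar - T) <= epsT ->
     (forall (i : 'I_s) (l : 'I_r),
        \sum_(j < s | lab j == l) Tbar i j = That (lab i) l) ->
     forall rhohat taubar : R,
     specrad calAhat <= rhohat ->
     (forall k : nat, opnorm (aug Tbar Abar ^+ k) <= taubar * rhohat ^+ k) ->
     specrad calA - specrad calAhat <= taubar * erho + (rhohat - specrad calAhat))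
  /\
  (* (T2) uniform stability *)
  (forall xi kappa : R,
     jsr A <= xi ->
     (forall (k : nat) (w : {ffun 'I_k -> 'I_s}),
        opnorm (prodmx A w) <= kappa * xi ^+ k) ->
     jsr Ahat - jsr A <= kappa * epsA + (xi - jsr A))
  /\
  (forall xihat kappabar : R,
     jsr Ahat <= xihat ->
     (forall (k : nat) (w : {ffun 'I_k -> 'I_s}),
        opnorm (prodmx Abar w) <= kappabar * xihat ^+ k) ->
     jsr A - jsr Ahat <= kappabar * epsA + (xihat - jsr Ahat)).
Proof.
move=> Terg hp hcA _ hT Ahat That Abar calA calAhat erho.
have Tm : markov T by case: Terg.
have hlump : approx_lumpable lab T epsT by case: hT => // /agg_lump.
have hdelta : \sum_j opnorm (Abar j - A j) <= epsA := delta_sum hcA.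
have eA : 0 <= epsA.
  by apply: le_trans hdelta; apply: sumr_ge0 => j _; exact: opnorm_ge0.
have hD1 : forall i, opnorm (Abar i - A i) <= epsA.
  move=> i; apply: le_trans hdelta; rewrite (bigD1 i) //= lerDl.
  by apply: sumr_ge0 => j _; exact: opnorm_ge0.
have hfT := lump_frob Tm hp hlump.
have eT : 0 <= epsT by apply: le_trans hfT; exact: sqrtr_ge0.
have hab : 0 <= Abar_max A := Abar_max_ge0 A.
have er0 : 0 <= erho.
  rewrite /erho /eps_rho mulr_ge0 ?sqrtr_ge0 // addr_ge0 // mulr_ge0 ?sqr_ge0 //.
  by rewrite addr_ge0 // mulr_ge0.
have pow0 : forall N (M : 'M[R]_N) t c, (forall k, opnorm (M ^+ k) <= t * c ^+ k) -> 0 <= t.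
  by move=> N M t c h; have := h 0%N; rewrite expr0 mulr1; apply: le_trans; exact: opnorm_ge0.
have word0 : forall (M : 'I_s -> 'M[R]_n) t c,
    (forall k (w : {ffun 'I_k -> 'I_s}), opnorm (prodmx M w) <= t * c ^+ k) -> 0 <= t.
  move=> M t c h; have := h 0%N (ffun0 (card_ord 0)); rewrite expr0 mulr1; apply: le_trans.
  exact: opnorm_ge0.
split.
  move=> rho tau hrho hpow.
  have t0 := pow0 _ _ _ _ hpow.
  have r0 : 0 <= rho := le_trans (specrad_ge0 calA) hrho.
  have Tbm := Tbar_markov Tm hp.
  have hD : opnorm (aug (Tbar lab T) Abar - calA) <= erho.
    apply: aug_pert => //; [by case: Tbm | by case: Tbm].
  have hpow' := pow_pert er0 hD hpow.
  suff : specrad calAhat <= rho + tau * erho by lra.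
  apply: (specrad_le_gen (K := tau)); first by rewrite addr_ge0 // mulr_ge0.
  move=> l hl k; apply: le_trans (hpow' k).
  apply: eig_bound.
  exact: (lift_root hp (Tbar_block T hp) hl).
split.
  move=> Tb hTbm _ hfrob hblk rhohat taubar hrh hpow.
  have t0 := pow0 _ _ _ _ hpow.
  have r0 : 0 <= rhohat := le_trans (specrad_ge0 calAhat) hrh.
  have hD' : opnorm (aug Tb Abar - calA) <= erho.
    apply: aug_pert => //; [by case: hTbm | by case: hTbm].
  have hD : opnorm (calA - aug Tb Abar) <= erho.
    by rewrite -opprB; apply: le_trans (opnormN _) hD'.
  have hpow' := pow_pert er0 hD hpow.
  suff : specrad calA <= rhohat + taubar * erho by lra.
  apply: (specrad_le (K := taubar)) => //.
  by rewrite addr_ge0 // mulr_ge0.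
split.
  move=> xi kap hxi hw.
  have k0 := word0 _ _ _ hw.
  have x0 : 0 <= xi := le_trans (jsr_ge0 A) hxi.
  have hw' := word_pert eA hD1 hw.
  suff : jsr Ahat <= xi + kap * epsA by lra.
  apply: (jsr_le (K := kap)); first by rewrite addr_ge0 // mulr_ge0.
  have ex : forall l : 'I_r, exists i, lab i == l by move=> l; have [i <-] := hp l; exists i.
  pose g l := xchoose (ex l).
  move=> k w; apply: le_trans (hw' k [ffun j => g (w j)]).
  rewrite le_eqVlt; apply/orP; left; apply/eqP; congr opnorm.
  rewrite !prodmxE; apply: eq_bigr => j _.
  by rewrite ffunE /Abar /exp_mats (eqP (xchooseP (ex (w j)))).
move=> xi kap hxi hw.
have k0 := word0 _ _ _ hw.
have x0 : 0 <= xi := le_trans (jsr_ge0 Ahat) hxi.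
have hD2 : forall i, opnorm (A i - Abar i) <= epsA.
  by move=> i; rewrite -opprB; apply: le_trans (opnormN _) (hD1 i).
have hw' := word_pert eA hD2 hw.
suff : jsr A <= xi + kap * epsA by lra.
apply: (jsr_le (K := kap)) => //.
by rewrite addr_ge0 // mulr_ge0.
Qed.
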